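(* In the standing setup, for all $S,T\in\mathfrak{S}$ we have $|\mathcal{N}_{(S,T)}|\le\gcd(\mathrm{eff}(\sigma^+_S),-\mathrm{eff}(\sigma^-_T))$ (whenever $\mathcal{N}_{(S,T)}\neq\emptyset$, so that both cycles are defined).
   Context: $\mathbb{N}=\{0,1,2,\dots\}$. A one-counter system (OCS) $\mathcal{O}$ consists of a finite set $Q$ of states, a set $T_{>0}\subseteq Q\times\{-1,0,1\}\times Q$ of non-zero transitions and a set $T_{=0}\subseteq Q\times\{0,1\}\times Q$ of zero tests. A configuration is a pair $(q,c)\in Q\times\mathbb{N}$ (state $q$, counter value $c$). A transition $t=(p,d,q)$ has source $p$, target $q$, effect $d$; it can be fired in $(p,c)$ if either $t\in T_{>0}$ and $c>0$, or $t\in T_{=0}$ and $c=0$, yielding $(q,c+d)$. A path is a sequence $(\gamma_1,t_1)\cdots(\gamma_m,t_m)$ such that, with some $\gamma_{m+1}$, firing $t_i$ in $\gamma_i$ yields $\gamma_{i+1}$ for all $i\le m$; its source is $\gamma_1$, target $\gamma_{m+1}$, length $\mathrm{len}=m$, configurations appearing on it are $\gamma_1,\dots,\gamma_{m+1}$, intermediate ones are $\gamma_2,\dots,\gamma_m$; its projection is $\mathrm{proj}=t_1\cdots t_m$ and its effect $\mathrm{eff}$ is the sum of the effects of its transitions. A sequence of transitions is consistent if each transition's target is the next one's source. A cycle is a consistent sequence of non-zero transitions starting and ending in the same state (its base state); positive/negative if its effect is positive/negative; simple if no state is visited twice except the base at start and end. The transition multigraph $G$ has vertices $Q$ and an edge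 $p\to q$ labelled $d$ for each $(p,d,q)\in T_{>0}$; $\mathfrak{S}$ is the set of its SCCs and $n_S$ the number of states in $S\in\mathfrak{S}$. A cycle is contained in $S$ if all its states lie in $S$; $S$ is positively (negatively) enabled if it contains a positive (negative) cycle. For every positively enabled $S$ a simple positive cycle $\sigma^+_S$ contained in $S$ is fixed, and for every negatively enabled $T$ a simple negative cycle $\sigma^-_T$ contained in $T$. An arc is a path whose source and target have counter value $0$ and whose intermediate configurations have positive counter value. A path is low if all configurations appearing on it have counter value $<5n$, where $n=|Q|$. For $S,T\in\mathfrak{S}$, an arc $\rho$ is $(S,T)$-normal if $\rho=\rho_{\mathrm{pref}}\rho_{\mathrm{up}}\rho_{\mathrm{cap}}\rho_{\mathrm{down}}\rho_{\mathrm{suff}}$ (normal decomposition) with $\rho_{\mathrm{pref}},\rho_{\mathrm{suff}}$ low, $\mathrm{proj}(\rho_{\mathrm{up}})=(\sigma^+_S)^a$, $\mathrm{proj}(\rho_{\mathrm{down}})=(\sigma^-_T)^b$ for some $a,b\in\mathbb{N}$, the source of $\rho_{\mathrm{cap}}$ having the base state of $\sigma^+_S$ and its target the base state of $\sigma^-_T$. Writing $A=\mathrm{eff}(\sigma^+_S)$, $B=-\mathrm{eff}(\sigma^-_T)$, such a decomposition is good if: (iii) $aA\le 2\,\mathrm{len}(\rho_{\mathrm{cap}})+2\,\mathrm{lcm}(A,B)$; (iv) $bB\le 2\,\mathrm{len}(\rho_{\mathrm{cap}})+2\,\mathrm{lcm}(A,B)$; (v) no infix of $\mathrm{proj}(\rho_{\mathrm{cap}})$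 is a cycle with effect divisible by $\gcd(A,B)$; (vi) the target of $\rho_{\mathrm{up}}$ and the source of $\rho_{\mathrm{down}}$ have counter values $>n$; (vii) all configurations appearing on $\rho_{\mathrm{pref}}$ and $\rho_{\mathrm{suff}}$ together are pairwise distinct. Standing setup: $\alpha,\beta$ are configurations with counter value $0$; $\rho=\rho^1\rho^2\cdots\rho^k$ is a path from $\alpha$ to $\beta$ that has the minimum possible number of appearing configurations with counter value $0$ among all paths from $\alpha$ to $\beta$; each $\rho^i$ is an arc; $\{1,\dots,k\}=\mathcal{L}\sqcup\mathcal{N}$ where for $i\in\mathcal{L}$, $\rho^i$ is a low arc of minimum length among all low arcs with the same source and target, and for $i\in\mathcal{N}$, $\rho^i$ is $(S_i,T_i)$-normal for some $S_i,T_i\in\mathfrak{S}$ with a fixed good normal decomposition $\rho^i=\rho^i_{\mathrm{pref}}\rho^i_{\mathrm{up}}\rho^i_{\mathrm{cap}}\rho^i_{\mathrm{down}}\rho^i_{\mathrm{suff}}$. For $S,T\in\mathfrak{S}$: $\mathcal{N}_{(S,T)}=\{i\in\mathcal{N}: (S_i,T_i)=(S,T)\}$, $\mathcal{N}_{(S,\cdot)}=\{i\in\mathcal{N}:S_i=S\}$, $\mathcal{N}_{(\cdot,T)}=\{i\in\mathcal{N}:T_i=T\}$. *)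

(* Defs.v *)
From mathcomp Require Import all_boot all_order all_algebra.
Set Implicit Arguments. Unset Strict Implicit. Unset Printing Implicit Defensive.
Import Order.TTheory GRing.Theory Num.Theory.

Section OCSDefs.
Variable Q : finType.

Definition config := (Q * nat)%type.
Definition trans := (Q * int * Q)%type.
Definition tsrc (t : trans) : Q := t.1.1.
Definition teff (t : trans) : int := t.1.2.
Definition ttgt (t : trans) : Q := t.2.

(* A one-counter system: non-zero transitions T_{>0} (effects in {-1,0,1})
   and zero tests T_{=0} (effects in {0,1}). *)
Record OCS := {
  Tpos : pred trans;
  Tzero : pred trans;
  Tpos_eff : forall t, Tpos t -> (teff t == (-1)%R) || (teff t == 0%R) || (teff t == 1%R);
  Tzero_eff : forall t, Tzero t -> (teff t == 0%R) || (teff t == 1%R)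
}.

Variable O : OCS.

Definition can_fire (g : config) (t : trans) : bool :=
  (tsrc t == g.1) && ((Tpos O t && (0 < g.2)%N) || (Tzero O t && (g.2 == 0%N))).
Definition next (g : config) (t : trans) : config :=
  (ttgt t, absz (g.2%:Z + teff t)%R).

(* A path is given by its source configuration and its projection (sequence of
   transitions); the configurations are then determined. *)
Record opath := Opath { psrc : config; ptr : seq trans }.

Fixpoint valid_from (g : config) (ts : seq trans) : bool :=
  if ts is t :: ts' then can_fire g t && valid_from (next g t) ts' else true.
Definition is_path (p : opath) : bool := valid_from (psrc p) (ptr p).
Definition configs (p : opath) : seq config := psrc p :: scanl next (psrc p) (ptr p).
Definition ptgt (p : opath) : config := foldl next (psrc p) (ptr p).
Definition intermediates (p : opath) : seq config :=
  behead (belast (psrc p) (scanl next (psrc p) (ptr p))).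
Definition len (p : opath) : nat := size (ptr p).
Definition eff (ts : seq trans) : int := (\sum_(t <- ts) teff t)%R.

Definition is_arc (p : opath) : bool :=
  [&& is_path p, (0 < len p)%N, (psrc p).2 == 0%N, (ptgt p).2 == 0%N &
      all (fun g : config => (0 < g.2)%N) (intermediates p)].
Definition is_low (p : opath) : bool :=
  all (fun g : config => (g.2 < 5 * #|Q|)%N) (configs p).

Definition consistent (ts : seq trans) : bool := sorted (fun t u => ttgt t == tsrc u) ts.
Definition is_cycle (ts : seq trans) : bool :=
  [&& all (Tpos O) ts, consistent ts &
      if ts is t :: _ then tsrc t == ttgt (last t ts) else false].
Definition cyc_base (ts : seq trans) : option Q := omap tsrc (ohead ts).
Definition simple (ts : seq trans) : bool := uniq (map tsrc ts).
Definition contained_in (S : {set Q}) (ts : seq trans) : bool :=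
  all (fun t => (tsrc t \in S) && (ttgt t \in S)) ts.

Definition edge : rel Q := fun x y =>
  [|| Tpos O (x, (-1)%R, y), Tpos O (x, 0%R, y) | Tpos O (x, 1%R, y)].
Definition is_SCC (S : {set Q}) : Prop :=
  exists x, S = [set y | connect edge x y && connect edge y x].

Definition pos_enabled (S : {set Q}) : Prop :=
  exists ts, [/\ is_cycle ts, contained_in S ts & (0 < eff ts)%R].
Definition neg_enabled (S : {set Q}) : Prop :=
  exists ts, [/\ is_cycle ts, contained_in S ts & (eff ts < 0)%R].

Definition pow_seq (s : seq trans) (a : nat) : seq trans := flatten (nseq a s).

Definition normal_decomp (sp sm : {set Q} -> seq trans) (S T : {set Q})
    (rho pref up cap down suff : opath) (a b : nat) : Prop :=
  [/\ [/\ is_arc rho, pos_enabled S & neg_enabled T],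
      [/\ is_path pref, is_path up, is_path cap, is_path down & is_path suff],
      [/\ psrc pref = psrc rho, psrc up = ptgt pref, psrc cap = ptgt up,
          psrc down = ptgt cap & psrc suff = ptgt down] &
    [/\ ptr rho = ptr pref ++ ptr up ++ ptr cap ++ ptr down ++ ptr suff,
      is_low pref /\ is_low suff,
      ptr up = pow_seq (sp S) a /\ ptr down = pow_seq (sm T) b &
      cyc_base (sp S) = Some (psrc cap).1 /\ cyc_base (sm T) = Some (ptgt cap).1]].

Definition good_decomp (sp sm : {set Q} -> seq trans) (S T : {set Q})
    (pref up cap down suff : opath) (a b : nat) : Prop :=
  let A := absz (eff (sp S)) in
  let B := absz (eff (sm T)) in
  [/\ (a * A <= 2 * len cap + 2 * lcmn A B)%N,
      (b * B <= 2 * len cap + 2 * lcmn A B)%N,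
      (forall ts, infix ts (ptr cap) -> is_cycle ts -> ~~ ((gcdn A B)%:Z %| eff ts)%Z),
      (#|Q| < (ptgt up).2)%N /\ (#|Q| < (psrc down).2)%N &
      uniq (configs pref ++ configs suff)].

Definition low_min_arc (p : opath) : Prop :=
  [/\ is_arc p, is_low p &
      forall p', is_arc p' -> is_low p' -> psrc p' = psrc p -> ptgt p' = ptgt p ->
        (len p <= len p')%N].

Definition zero_count (p : opath) : nat := count (fun g : config => g.2 == 0%N) (configs p).

Definition concat_path (alpha : config) (k : nat) (r : 'I_k -> opath) : opath :=
  Opath alpha (flatten [seq ptr (r i) | i <- enum 'I_k]).

Definition chain (alpha beta : config) (k : nat) (r : 'I_k -> opath) : Prop :=
  [/\ k = 0%N -> alpha = beta,
      forall i : 'I_k, nat_of_ord i = 0%N -> psrc (r i) = alpha,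
      forall i : 'I_k, nat_of_ord i = k.-1 -> ptgt (r i) = beta &
      forall i j : 'I_k, nat_of_ord j = (nat_of_ord i).+1 -> psrc (r j) = ptgt (r i)].

End OCSDefs.

(* Main.v *)
Require Import Defs.
From mathcomp Require Import all_boot all_order all_algebra zify.
Set Implicit Arguments. Unset Strict Implicit. Unset Printing Implicit Defensive.
Import Order.TTheory GRing.Theory Num.Theory.

Definition zc (Q : finType) (c : config Q) : bool := c.2 == 0%N.
Definition ps (Q : finType) (c : config Q) : bool := (0 < c.2)%N.
Definition sh (Q : finType) (d : nat) (c : config Q) : config Q := (c.1, c.2 + d)%N.

Lemma valid_cat (Q : finType) (O : OCS Q) g s1 s2 :
  valid_from O g (s1 ++ s2) = valid_from O g s1 && valid_from O (foldl (@Defs.next Q) g s1) s2.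
Proof. elim: s1 g => [|t s IH] g //=. by rewrite IH andbA. Qed.

Lemma count_last_zero (Q : finType) (g : config Q) s :
  s != [::] -> (foldl (@Defs.next Q) g s).2 = 0%N -> (0 < count (@zc Q) (scanl (@Defs.next Q) g s))%N.
Proof.
case/lastP: s => [|s t] // _. rewrite -cats1 scanl_cat foldl_cat count_cat => H.
rewrite /zc /= in H *. by rewrite H addn1.
Qed.

Lemma all_pos_count0 (Q : finType) (s : seq (config Q)) :
  all (@ps Q) s -> count (@zc Q) s = 0%N.
Proof. elim: s => //= c s IH /andP[h /IH ->]. rewrite addn0 /zc; move: h; rewrite /ps; by case: (c.2). Qed.

Lemma count0_all_pos (Q : finType) (s : seq (config Q)) :
  count (@zc Q) s = 0%N -> all (@ps Q) s.
Proof.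
elim: s => //= c s IH. rewrite /zc /ps. case: (c.2) => [|m] //= H.
Qed.

Lemma arc_count_le1 (Q : finType) (O : OCS Q) (p : opath Q) : is_arc O p ->
  (count (@zc Q) (scanl (@Defs.next Q) (psrc p) (ptr p)) <= 1)%N.
Proof.
case/and5P=> _ _ _ _. rewrite /intermediates. case: (ptr p) => [|t s] //=.
set x := Defs.next _ t. move=> Hall. have := all_pos_count0 Hall.
have -> : zc x + count (@zc Q) (scanl (@Defs.next Q) x s) = count (@zc Q) (x :: scanl (@Defs.next Q) x s) by []. rewrite lastI -cats1 count_cat => ->. by rewrite /= addn0; case: (zc _).
Qed.

Lemma arc_prefix0 (Q : finType) (O : OCS Q) g s1 s2 : is_arc O (Opath g (s1 ++ s2)) ->
  (foldl (@Defs.next Q) g s1).2 != 0%N -> count (@zc Q) (scanl (@Defs.next Q) g s1) = 0%N.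
Proof.
move=> Ha Hn. have H1 := arc_count_le1 Ha. rewrite /= scanl_cat count_cat in H1.
case/and5P: Ha => _ _ _ /eqP Ht _. rewrite /ptgt /= foldl_cat in Ht.
have H2 : (0 < count (@zc Q) (scanl (@Defs.next Q) (foldl (@Defs.next Q) g s1) s2))%N.
  have Hne : s2 != [::] by move: Ht; case: (s2) => //= Ht; rewrite Ht in Hn.
  exact: count_last_zero Hne Ht.
lia.
Qed.

Lemma arc_suffix1 (Q : finType) (O : OCS Q) g s1 s2 : is_arc O (Opath g (s1 ++ s2)) ->
  (count (@zc Q) (scanl (@Defs.next Q) (foldl (@Defs.next Q) g s1) s2) <= 1)%N.
Proof.
move=> Ha. have H1 := arc_count_le1 Ha. rewrite /= scanl_cat count_cat in H1. lia.
Qed.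

Lemma step_shift (Q : finType) (O : OCS Q) d (g : config Q) t :
  can_fire O g t -> (0 < g.2)%N ->
  can_fire O (sh d g) t /\ Defs.next (sh d g) t = sh d (Defs.next g t).
Proof.
rewrite /can_fire /sh /next /=. case/andP=> -> /orP[/andP[Hp _]|/andP[_ /eqP->]] Hg //.
rewrite Hp /=. split; first lia.
congr pair. have := Tpos_eff Hp. case/orP => [/orP[]|] /eqP -> /=; lia.
Qed.

Lemma shift_valid (Q : finType) (O : OCS Q) d ts : forall g : config Q,
  valid_from O g ts -> all (@ps Q) (g :: scanl (@Defs.next Q) g ts) ->
  [/\ valid_from O (sh d g) ts, scanl (@Defs.next Q) (sh d g) ts = map (sh d) (scanl (@Defs.next Q) g ts)
    & foldl (@Defs.next Q) (sh d g) ts = sh d (foldl (@Defs.next Q) g ts)].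
Proof.
elim: ts => [|t ts IH] g //=. case/andP => Hf Hv /and3P[Hg Hn Hall].
have [Hf' Hnx] := step_shift d Hf Hg. rewrite Hf' Hnx /=.
have [-> -> ->] := IH _ Hv (introT andP (conj Hn Hall)). by [].
Qed.

Lemma run_pos (Q : finType) (O : OCS Q) ts : forall (q : Q) (h : nat),
  all (Tpos O) ts -> consistent ts ->
  (forall t, ohead ts = Some t -> tsrc t = q) -> (size ts < h)%N ->
  [/\ valid_from O (q, h) ts, all (@ps Q) (scanl (@Defs.next Q) (q, h) ts) &
      foldl (@Defs.next Q) (q, h) ts = (last q (map (@ttgt Q) ts), absz (h%:Z + eff ts)%R)].
Proof.
elim: ts => [|t ts IH] q h /=.
  by move=> _ _ _ _; rewrite /eff big_nil addr0.
case/andP=> Hp Hall Hc Hs Hh.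
have Hq := Hs t erefl.
have He := Tpos_eff Hp.
have Hf : can_fire O (q, h) t by rewrite /can_fire Hq eqxx Hp /=; apply/orP; left; lia.
have Hc' : consistent ts by move: Hc; rewrite /consistent /=; exact: path_sorted.
have Hs' : forall u, ohead ts = Some u -> tsrc u = ttgt t.
  move=> u; case: ts Hc {IH Hall Hc' Hh} => //= u' ts' /andP[/eqP E _] [<-]. by rewrite E.
have Hh' : (size ts < absz (h%:Z + teff t)%R)%N.
  by case/orP: He => [/orP[]|] /eqP ->; lia.
have [Hv Hps Hfo] := IH (ttgt t) _ Hall Hc' Hs' Hh'.
rewrite /Defs.next /= Hf Hv. split => //.
  apply/andP; split => //. rewrite /ps /=. lia.
rewrite Hfo /eff big_cons. congr pair.
  case/orP: He => [/orP[]|] /eqP ->; move: (\sum_(j <- ts) teff j)%R => X; lia.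
Qed.

Lemma pow_seqS (Q : finType) (s : seq (trans Q)) x : pow_seq s x.+1 = s ++ pow_seq s x.
Proof. by []. Qed.

Lemma cycle_facts (Q : finType) (O : OCS Q) sig q : is_cycle O sig -> cyc_base sig = Some q ->
  [/\ all (Tpos O) sig, consistent sig, (forall t, ohead sig = Some t -> tsrc t = q)
    & last q (map (@ttgt Q) sig) = q].
Proof.
case/and3P => Ha Hc. case: sig Ha Hc => //= t s Ha Hc /eqP Hl [Hq].
split => //. - by move=> u [<-].
by rewrite last_map -Hl.
Qed.

Lemma iter_up (Q : finType) (O : OCS Q) sig q (A : nat) :
  is_cycle O sig -> cyc_base sig = Some q -> eff sig = (A%:Z)%R -> (size sig <= #|Q|)%N ->
  forall x h, (#|Q| < h)%N ->
  [/\ valid_from O (q, h) (pow_seq sig x), all (@ps Q) (scanl (@Defs.next Q) (q, h) (pow_seq sig x)) &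
      foldl (@Defs.next Q) (q, h) (pow_seq sig x) = (q, h + x * A)%N].
Proof.
move=> Hcy Hb He Hsz. have [Ha Hc Hs Hl] := cycle_facts Hcy Hb.
elim=> [|x IH] h Hh. by split => //; rewrite addn0.
have [Hv Hp Hf] := run_pos Ha Hc Hs (leq_ltn_trans Hsz Hh).
rewrite He Hl in Hf.
have Hh2 : (#|Q| < h + A)%N by lia.
have [Hv2 Hp2 Hf2] := IH _ Hh2.
have E : absz (h%:Z + A%:Z)%R = (h + A)%N by lia.
rewrite E in Hf.
rewrite pow_seqS valid_cat scanl_cat all_cat foldl_cat Hf Hv Hv2 Hp Hp2 Hf2.
split => //. congr pair. lia.
Qed.

Lemma iter_down (Q : finType) (O : OCS Q) sig q (B : nat) :
  is_cycle O sig -> cyc_base sig = Some q -> eff sig = (- B%:Z)%R -> (size sig <= #|Q|)%N ->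
  forall y d, (#|Q| < d)%N ->
  [/\ valid_from O (q, d + y * B)%N (pow_seq sig y),
      all (@ps Q) (scanl (@Defs.next Q) (q, d + y * B)%N (pow_seq sig y)) &
      foldl (@Defs.next Q) (q, d + y * B)%N (pow_seq sig y) = (q, d)].
Proof.
move=> Hcy Hb He Hsz. have [Ha Hc Hs Hl] := cycle_facts Hcy Hb.
elim=> [|y IH] d Hd. by split => //; rewrite addn0.
have Hh : (size sig < d + y.+1 * B)%N by lia.
have [Hv Hp Hf] := run_pos Ha Hc Hs Hh.
rewrite He Hl in Hf.
have E : absz ((d + y.+1 * B)%N%:Z + - B%:Z)%R = (d + y * B)%N by lia.
rewrite E in Hf.
have [Hv2 Hp2 Hf2] := IH _ Hd.
by rewrite pow_seqS valid_cat scanl_cat all_cat foldl_cat Hf Hv Hv2 Hp Hp2 Hf2.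
Qed.

Lemma simple_size (Q : finType) (s : seq (trans Q)) : simple s -> (size s <= #|Q|)%N.
Proof.
rewrite /simple => Hu. rewrite -(size_map (@tsrc Q)) -(card_uniqP Hu). exact: max_card.
Qed.

Lemma bezout_nat A B u v : (0 < A)%N -> (0 < B)%N -> u = v %[mod gcdn A B] ->
  exists x y, (u + x * A = v + y * B)%N.
Proof.
move=> HA HB Hm. have [Huv|Hvu] := leqP u v.
  have : gcdn A B %| v - u by rewrite -eqn_mod_dvd // Hm.
  case/dvdnP => t Ht.
  have [a _ /dvdnP[p Hp]] := Bezoutl B HA.
  exists (t * p), (t * a). rewrite -mulnA -Hp mulnDr mulnA. nia.
have : gcdn A B %| u - v by rewrite -eqn_mod_dvd ?Hm // ltnW.
case/dvdnP => t Ht.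
have [b _ /dvdnP[p Hp]] := Bezoutl A HB. rewrite gcdnC in Hp.
exists (t * b), (t * p). rewrite -(mulnA t p) -Hp mulnDr mulnA. nia.
Qed.

Lemma arc_cnt1 (Q : finType) (O : OCS Q) (p : opath Q) : is_arc O p ->
  (0 < count (@zc Q) (scanl (@Defs.next Q) (psrc p) (ptr p)))%N.
Proof.
case/and5P=> _ Hl _ /eqP Ht _. apply: count_last_zero Ht.
by move: Hl; rewrite /len; case: (ptr p).
Qed.

Lemma chain_fold (Q : finType) (k : nat) (rn : nat -> opath Q)
  (Hcs : forall m, (m.+1 < k)%N -> psrc (rn m.+1) = ptgt (rn m)) :
  forall n m, (m + n < k)%N ->
  foldl (@Defs.next Q) (psrc (rn m)) (flatten (map (fun n => ptr (rn n)) (iota m n))) = psrc (rn (m + n)).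
Proof.
elim=> [|n IH] m H; first by rewrite addn0.
rewrite /= foldl_cat -/(ptgt (rn m)) -Hcs; last lia.
rewrite IH; last lia. by rewrite addSnnS.
Qed.

Lemma surgery (Q : finType) (O : OCS Q) (alpha : config Q) (k : nat) (rn : nat -> opath Q)
  (Hc0 : (0 < k)%N -> psrc (rn 0) = alpha)
  (Hcs : forall m, (m.+1 < k)%N -> psrc (rn m.+1) = ptgt (rn m))
  (Harc : forall m, (m < k)%N -> is_arc O (rn m))
  (Hp : valid_from O alpha (flatten (map (fun n => ptr (rn n)) (iota 0 k))))
  i j (Hij : (i < j)%N) (Hjk : (j < k)%N) N
  (HNv : valid_from O (psrc (rn i)) N) (HNf : foldl (@Defs.next Q) (psrc (rn i)) N = ptgt (rn j))
  (HNc : (count (@zc Q) (scanl (@Defs.next Q) (psrc (rn i)) N) <= 1)%N) :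
  exists ts, [/\ valid_from O alpha ts,
    foldl (@Defs.next Q) alpha ts = foldl (@Defs.next Q) alpha (flatten (map (fun n => ptr (rn n)) (iota 0 k))) &
    (count (@zc Q) (alpha :: scanl (@Defs.next Q) alpha ts) <
     count (@zc Q) (alpha :: scanl (@Defs.next Q) alpha (flatten (map (fun n => ptr (rn n)) (iota 0 k)))))%N].
Proof.
set F := fun n => ptr (rn n).
have Ek : k = (i + (1 + (j - i.+1 + (1 + (k - j.+1)))))%N by lia.
set P := flatten (map F (iota 0 i)).
set Mid := flatten (map F (iota i.+1 (j - i.+1))).
set R := flatten (map F (iota j.+1 (k - j.+1))).
have Eold : flatten (map F (iota 0 k)) = P ++ (F i ++ (Mid ++ (F j ++ R))).
  rewrite {1}Ek !iotaD !map_cat !flatten_cat /= cats0 !add0n.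
  have -> : (i + 1 + (j - i.+1) = j)%N by lia.
  have -> : (i + 1 = i.+1)%N by lia.
  by rewrite cats0 addn1.
rewrite Eold.
have fP : foldl (@Defs.next Q) alpha P = psrc (rn i).
  rewrite -Hc0; last lia. rewrite /P (chain_fold Hcs) //; lia.
have fMid : foldl (@Defs.next Q) (ptgt (rn i)) Mid = psrc (rn j).
  rewrite -Hcs; last lia. rewrite /Mid (chain_fold Hcs); last lia. congr (psrc (rn _)); lia.
have fi : foldl (@Defs.next Q) (psrc (rn i)) (F i) = ptgt (rn i) by [].
have fj : foldl (@Defs.next Q) (psrc (rn j)) (F j) = ptgt (rn j) by [].
rewrite Eold in Hp.
move: Hp; rewrite !valid_cat !foldl_cat fP fi fMid fj => /and5P[HvP _ _ _ HvR].
exists (P ++ N ++ R). split.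
- by rewrite !valid_cat fP HvP HNv HNf HvR.
- by rewrite !foldl_cat fP HNf.
rewrite /= !scanl_cat !count_cat fP fi HNf fMid fj.
have := arc_cnt1 (Harc i ltac:(lia)). have := arc_cnt1 (Harc j ltac:(lia)).
rewrite -/(F i) -/(F j). lia.
Qed.

Lemma sh_all (Q : finType) d (s : seq (config Q)) : all (@ps Q) s -> all (@ps Q) (map (sh d) s).
Proof. rewrite all_map. apply: sub_all => c. rewrite /ps /sh /=. lia. Qed.

Lemma fold_app (Q : finType) (p1 p2 : opath Q) s : psrc p2 = ptgt p1 ->
  foldl (@Defs.next Q) (psrc p1) (ptr p1 ++ s) = foldl (@Defs.next Q) (psrc p2) s.
Proof. by move=> E; rewrite foldl_cat E. Qed.

Lemma fold_ptgt (Q : finType) (p : opath Q) : foldl (@Defs.next Q) (psrc p) (ptr p) = ptgt p.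
Proof. by []. Qed.

Lemma opath_eta (Q : finType) (p : opath Q) : p = Opath (psrc p) (ptr p).
Proof. by case: p. Qed.

Theorem lemma5 (Q : finType) (O : OCS Q)
  (sp sm : {set Q} -> seq (trans Q))
  (Hsp : forall S, is_SCC O S -> pos_enabled O S ->
           [/\ is_cycle O (sp S), simple (sp S), contained_in S (sp S) & (0 < eff (sp S))%R])
  (Hsm : forall T, is_SCC O T -> neg_enabled O T ->
           [/\ is_cycle O (sm T), simple (sm T), contained_in T (sm T) & (eff (sm T) < 0)%R])
  (alpha beta : config Q) (Ha : alpha.2 = 0%N) (Hb : beta.2 = 0%N)
  (k : nat) (r : 'I_k -> opath Q)
  (Hchain : chain alpha beta r)
  (Hrho : is_path O (concat_path alpha r) /\ ptgt (concat_path alpha r) = beta)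
  (Hmin : forall p, is_path O p -> psrc p = alpha -> ptgt p = beta ->
            (zero_count (concat_path alpha r) <= zero_count p)%N)
  (Harc : forall i, is_arc O (r i))
  (Nset : {set 'I_k})
  (HL : forall i, i \notin Nset -> low_min_arc O (r i))
  (Sf Tf : 'I_k -> {set Q}) (pref up cap down suff : 'I_k -> opath Q) (a b : 'I_k -> nat)
  (HN : forall i, i \in Nset ->
          [/\ is_SCC O (Sf i), is_SCC O (Tf i),
              normal_decomp O sp sm (Sf i) (Tf i) (r i)
                (pref i) (up i) (cap i) (down i) (suff i) (a i) (b i) &
              good_decomp O sp sm (Sf i) (Tf i)
                (pref i) (up i) (cap i) (down i) (suff i) (a i) (b i)]) :
  forall S T : {set Q}, is_SCC O S -> is_SCC O T ->
    [set i in Nset | (Sf i == S) && (Tf i == T)] != set0 ->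
    (#|[set i in Nset | (Sf i == S) && (Tf i == T)]|
       <= gcdn (absz (eff (sp S))) (absz (eff (sm T))))%N.
Proof.
move=> S T HS HT Hne.
set Nst := [set i in Nset | _].
case/set0Pn: (Hne) => i0 Hi0.
move: (Hi0); rewrite inE => /andP[Hi0N /andP[/eqP HSi0 /eqP HTi0]].
have [_ _ Hnd0 _] := HN i0 Hi0N.
case: Hnd0 => [[_ HpeS HneT] _ _ _]. rewrite HSi0 in HpeS; rewrite HTi0 in HneT.
have [HcyS HsiS _ HeS] := Hsp S HS HpeS.
have [HcyT HsiT _ HeT] := Hsm T HT HneT.
set A := absz (eff (sp S)). set B := absz (eff (sm T)).
have EA : eff (sp S) = (A%:Z)%R by rewrite /A; lia.
have EB : eff (sm T) = (- B%:Z)%R by rewrite /B; lia.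
have A0 : (0 < A)%N by rewrite /A; lia.
have B0 : (0 < B)%N by rewrite /B; lia.
set g := gcdn A B.
have g0 : (0 < g)%N by rewrite gcdn_gt0 A0.
set h := fun i => (ptgt (up i)).2.
set rn := fun n => odflt (Opath alpha [::]) (omap r (insub n)).
have rnE : forall i : 'I_k, rn i = r i by move=> i; rewrite /rn valK.
have rnE' : forall m (H : (m < k)%N), rn m = r (Ordinal H) by move=> m H; rewrite /rn insubT.
have Eflat : [seq ptr (r i) | i <- enum 'I_k] = [seq ptr (rn n) | n <- iota 0 k].
  rewrite -val_enum_ord -map_comp; apply: eq_map => i /=; by rewrite rnE.
case: Hchain => _ Hc0 _ Hcs.
have merge : forall i j, i \in Nst -> j \in Nst -> (i < j)%N -> h i = h j %[mod g] -> False.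
  move=> i j Hi Hj Hij Hm.
  move: (Hi) (Hj); rewrite !inE => /andP[HiN /andP[/eqP HSi /eqP HTi]] /andP[HjN /andP[/eqP HSj /eqP HTj]].
  have [_ _ [[Harci _ _] [Hpri Hupi Hcapi Hdni Hsfi] [Es1 Es2 Es3 Es4 Es5] [Eri _ _ [Hbi Hbi']]] [_ _ _ [Hupi' Hdni'] _]] := HN i HiN.
  have [_ _ [[Harcj _ _] [Hprj Hupj Hcapj Hdnj Hsfj] [Et1 Et2 Et3 Et4 Et5] [Erj _ _ [Hbj Hbj']]] [_ _ _ [Hupj' Hdnj'] _]] := HN j HjN.
  rewrite /is_path in Hpri Hupi Hcapi Hdni Hsfi Hprj Hupj Hcapj Hdnj Hsfj.
  rewrite HSi in Hbi; rewrite HTi in Hbi'; rewrite HSj in Hbj; rewrite HTj in Hbj'.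
  have EqS : (psrc (cap j)).1 = (psrc (cap i)).1 by move: Hbi; rewrite Hbj => -[].
  have HUv : valid_from O (psrc (r i)) (ptr (pref i) ++ ptr (up i)).
    by rewrite valid_cat -Es1 Hpri /= fold_ptgt -Es2 Hupi.
  have HUf : foldl (@Defs.next Q) (psrc (r i)) (ptr (pref i) ++ ptr (up i)) = ((psrc (cap i)).1, h i).
    by rewrite foldl_cat -Es1 fold_ptgt -Es2 fold_ptgt Es3 /h; case: (ptgt (up i)).
  have HUc : count (@zc Q) (scanl (@Defs.next Q) (psrc (r i)) (ptr (pref i) ++ ptr (up i))) = 0%N.
    have Ha' := Harci. rewrite (opath_eta (r i)) Eri catA in Ha'.
    apply: (arc_prefix0 Ha'). rewrite HUf /h /=. clear -Hupi'; lia.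
  have F1 : foldl (@Defs.next Q) (psrc (pref j)) ((ptr (pref j) ++ ptr (up j)) ++ ptr (cap j)) = psrc (down j).
    by rewrite -catA (fold_app _ Et2) (fold_app _ Et3) Et4.
  have Hd0 : (psrc (down j)).2 != 0%N by clear -Hdnj'; lia.
  have Ha'j := Harcj. rewrite (opath_eta (r j)) Erj 2!catA -Et1 in Ha'j.
  have Hcps : all (@ps Q) (psrc (cap j) :: scanl (@Defs.next Q) (psrc (cap j)) (ptr (cap j))).
    rewrite /=. apply/andP; split; first by rewrite /ps Et3; clear -Hupj'; lia.
    have Hne0 : (foldl (@Defs.next Q) (psrc (pref j)) ((ptr (pref j) ++ ptr (up j)) ++ ptr (cap j))).2 != 0%N.
      by rewrite F1.
    have H0 := arc_prefix0 Ha'j Hne0.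
    rewrite scanl_cat count_cat (fold_app _ Et2) fold_ptgt -Et3 in H0.
    apply: count0_all_pos. clear -H0; lia.
  have HVv : valid_from O (psrc (down j)) (ptr (down j) ++ ptr (suff j)).
    by rewrite valid_cat Hdnj /= fold_ptgt -Et5 Hsfj.
  have HVf : foldl (@Defs.next Q) (psrc (down j)) (ptr (down j) ++ ptr (suff j)) = ptgt (r j).
    rewrite (fold_app _ Et5) /ptgt Erj -Et1 (fold_app _ Et2) (fold_app _ Et3) (fold_app _ Et4).
    by rewrite (fold_app _ Et5).
  have HVc : (count (@zc Q) (scanl (@Defs.next Q) (psrc (down j)) (ptr (down j) ++ ptr (suff j))) <= 1)%N.
    have := arc_suffix1 Ha'j. by rewrite F1.
  have [x [y Hxy]] := bezout_nat A0 B0 Hm.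
  have HszS := simple_size HsiS. have HszT := simple_size HsiT.
  have [HXv HXp HXf] := iter_up HcyS Hbi EA HszS x Hupi'.
  have [HYv HYp HYf] := iter_down HcyT Hbj' EB HszT y Hdnj'.
  have [HCv HCs HCf] := shift_valid (y * B) Hcapj Hcps.
  rewrite fold_ptgt in HCf.
  have E1 : ((psrc (cap i)).1, h i + x * A)%N = sh (y * B) (psrc (cap j)).
    rewrite /sh EqS Et3 Hxy. by [].
  have E2 : sh (y * B) (ptgt (cap j)) = ((ptgt (cap j)).1, (psrc (down j)).2 + y * B)%N.
    by rewrite /sh Et4.
  have E3 : ((ptgt (cap j)).1, (psrc (down j)).2) = psrc (down j).
    by rewrite Et4; case: (ptgt (cap j)).
  set N := (ptr (pref i) ++ ptr (up i)) ++ (pow_seq (sp S) x ++ (ptr (cap j) ++ (pow_seq (sm T) y ++ (ptr (down j) ++ ptr (suff j))))).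
  have HNv : valid_from O (psrc (r i)) N.
    rewrite /N valid_cat HUv HUf valid_cat HXv HXf E1 valid_cat HCv HCf E2 valid_cat HYv HYf E3 HVv. by [].
  have HNf : foldl (@Defs.next Q) (psrc (r i)) N = ptgt (r j).
    by rewrite /N foldl_cat HUf foldl_cat HXf E1 foldl_cat HCf E2 foldl_cat HYf E3 HVf.
  have HNc : (count (@zc Q) (scanl (@Defs.next Q) (psrc (r i)) N) <= 1)%N.
    rewrite /N scanl_cat count_cat HUc HUf scanl_cat count_cat (all_pos_count0 HXp) HXf E1.
    rewrite scanl_cat count_cat HCs (all_pos_count0 (sh_all _ (proj2 (andP Hcps)))) HCf E2.
    rewrite scanl_cat count_cat (all_pos_count0 HYp) HYf E3.
    by rewrite !add0n.
  have Hc0' : (0 < k)%N -> psrc (rn 0%N) = alpha.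
    move=> H; rewrite (rnE' 0%N H). exact: Hc0.
  have Hcs' : forall m, (m.+1 < k)%N -> psrc (rn m.+1) = ptgt (rn m).
    move=> m H; rewrite (rnE' _ H) (rnE' m (ltnW H)). exact: Hcs.
  have Harc' : forall m, (m < k)%N -> is_arc O (rn m).
    move=> m H; rewrite (rnE' _ H). exact: Harc.
  have Hp' : valid_from O alpha (flatten (map (fun n => ptr (rn n)) (iota 0 k))).
    by have := proj1 Hrho; rewrite /is_path /concat_path /= Eflat.
  rewrite -!rnE in HNv HNf HNc.
  have [ts [Hv Hf Hc]] := surgery Hc0' Hcs' Harc' Hp' Hij (ltn_ord j) HNv HNf HNc.
  have Hf' : ptgt (Opath alpha ts) = beta.
    by rewrite /ptgt /= Hf -(proj2 Hrho) /ptgt /concat_path /= Eflat.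
  have := Hmin (Opath alpha ts) Hv erefl Hf'.
  rewrite /zero_count /configs /concat_path /= Eflat.
  rewrite /zc /= in Hc. move=> H; clear -H Hc; lia.

suff Hinj : {in Nst &, injective (fun i => Ordinal (ltn_pmod (h i) g0) : 'I_g)}.
  rewrite -(card_in_imset Hinj). apply: leq_trans (max_card _) _. by rewrite card_ord.
move=> i j Hi Hj /(congr1 val) /= Hm.
case: (ltngtP i j) => [lt|lt|/val_inj //].
- by case: (merge _ _ Hi Hj lt Hm).
- by case: (merge _ _ Hj Hi lt (esym Hm)).
Qed.
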